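(* Let $n$ be an odd positive integer. Then for every integer $\ell\ge 2$, \[\max(n,\ell)=\binom{n}{2}-\left\lfloor\frac{n}{2}\right\rfloor.\] Moreover, $\overline{M_n}$ is (up to isomorphism) the unique $N$-AW graph of maximum size on $n$ vertices.
   Context: All graphs are finite and simple; $\overline{G}$ is the complement of $G$. Vertex labels lie in $\mathbb{Z}_\ell$. In the neighborhood Lights Out game on $G$, toggling a vertex $v$ adds $1$ (mod $\ell$) to the label of each vertex of the closed neighborhood $N[v]$; the game is won when all labels are $0$. $G$ is $N$-AW if the game can be won from every initial labeling $V(G)\to\mathbb{Z}_\ell$. $\max(n,\ell)$ is the maximum number of edges of an $N$-AW graph on $n$ vertices. For odd $n$, $M_n$ denotes a near-perfect matching on $n$ vertices: $(n-1)/2$ disjoint edges together with one isolated vertex. *)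

(* Defs.v *)
From mathcomp Require Import all_boot all_order all_algebra.
From mathcomp Require Import fingroup perm.
Set Implicit Arguments. Unset Strict Implicit. Unset Printing Implicit Defensive.
Import GRing.Theory.
Local Open Scope ring_scope.

Definition simple_graph (n : nat) (e : rel 'I_n) : Prop :=
  symmetric e /\ irreflexive e.

Definition nedges (n : nat) (e : rel 'I_n) : nat :=
  #|[set p : 'I_n * 'I_n | (p.1 < p.2)%N && e p.1 p.2]|.

Definition in_closed_nbhd (n : nat) (e : rel 'I_n) (u v : 'I_n) : bool :=
  (v == u) || e u v.

(* Labels after performing the sequence of toggles s from labeling f:
   each toggle of u adds 1 (mod l) to every vertex of N[u]. *)
Definition after_toggles (n l : nat) (e : rel 'I_n) (f : 'I_n -> 'Z_l)
    (s : seq 'I_n) (v : 'I_n) : 'Z_l :=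
  f v + (count (fun u => in_closed_nbhd e u v) s)%:R.

(* N-AW ("always winnable") for the neighborhood Lights Out game over Z_l. *)
Definition NAW (n l : nat) (e : rel 'I_n) : Prop :=
  forall f : 'I_n -> 'Z_l, exists s : seq 'I_n,
    forall v : 'I_n, after_toggles e f s v = 0%R.

Definition gcompl (n : nat) (e : rel 'I_n) : rel 'I_n :=
  fun u v => (u != v) && ~~ e u v.

(* Near-perfect matching M_n (n odd): edges {2i, 2i+1} for 2i+1 < n;
   the vertex n-1 is isolated. *)
Definition Mn (n : nat) : rel 'I_n :=
  fun u v => (u != v) && ((val u)./2 == (val v)./2).

Definition isomorphic (n : nat) (e h : rel 'I_n) : Prop :=
  exists p : {perm 'I_n}, forall u v, e u v = h (p u) (p v).

Arguments NAW {n} l e.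
Arguments after_toggles {n l} e f s v.
Arguments Mn n : clear implicits.

(* Main.v *)
Require Import Defs.
From mathcomp Require Import all_boot all_order all_algebra.
From mathcomp Require Import fingroup perm zify.
Set Implicit Arguments. Unset Strict Implicit. Unset Printing Implicit Defensive.
Import GRing.Theory.

Lemma sum_lt (n v : nat) : \sum_(u < n) (u < v) = minn v n.
Proof.
elim: n => [|n IH]; first by rewrite big_ord0; lia.
rewrite big_ord_recr /= IH; case: (ltnP n v) => /= h; lia.
Qed.

Lemma sum_pairs_lt (n : nat) : \sum_(u : 'I_n) \sum_(v : 'I_n) (u < v) = 'C(n, 2).
Proof.
rewrite exchange_big /= -bin2_sum big_mkord; apply: eq_bigr => v _.
rewrite sum_lt; have := ltn_ord v; lia.
Qed.

Lemma card_pairs (n : nat) (P : 'I_n -> 'I_n -> bool) :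
  #|[set p : 'I_n * 'I_n | P p.1 p.2]| = \sum_u \sum_v P u v.
Proof.
rewrite pair_bigA /= -sum1_card big_mkcond /=; apply: eq_bigr => p _.
by rewrite inE; case: (P _ _).
Qed.

Definition deg (n : nat) (c : rel 'I_n) (u : 'I_n) := \sum_(v : 'I_n) c u v.

Lemma handshake (n : nat) (c : rel 'I_n) : symmetric c -> irreflexive c ->
  \sum_u deg c u = 2 * nedges c.
Proof.
move=> hs hi; rewrite /nedges (card_pairs (fun u v => (u < v) && c u v)) /deg.
have -> : \sum_u \sum_v (c u v : nat) =
   \sum_(u : 'I_n) \sum_(v : 'I_n) ((u < v) && c u v) + \sum_(u : 'I_n) \sum_(v : 'I_n) ((v < u) && c u v).
  rewrite -big_split; apply: eq_bigr => u _; rewrite -big_split; apply: eq_bigr => v _ /=.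
  case: (ltngtP u v) => h /=; rewrite ?addn0 //.
  by rewrite (val_inj h) hi.
rewrite [X in _ + X]exchange_big /=.
have -> : \sum_(u : 'I_n) \sum_(v : 'I_n) ((u < v) && c v u) = \sum_(u : 'I_n) \sum_(v : 'I_n) ((u < v) && c u v).
  by apply: eq_bigr => u _; apply: eq_bigr => v _; rewrite hs.
by rewrite mul2n addnn.
Qed.

Lemma nedges_compl (n : nat) (e : rel 'I_n) :
  nedges e + nedges (gcompl e) = 'C(n, 2).
Proof.
rewrite /nedges (card_pairs (fun u v => (u < v) && e u v)) (card_pairs (fun u v => (u < v) && gcompl e u v)) -sum_pairs_lt -big_split; apply: eq_bigr => u _.
rewrite -big_split; apply: eq_bigr => v _ /=; rewrite /gcompl.
case: (ltngtP u v) => h //=.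
by rewrite neq_ltn h /=; case: (e u v).
Qed.

Lemma deg0P (n : nat) (c : rel 'I_n) u : deg c u = 0 -> forall v, ~~ c u v.
Proof.
move=> /eqP; rewrite /deg sum_nat_eq0 => /forallP h v.
by have := h v; case: (c u v).
Qed.

Lemma sum_ones (n : nat) : \sum_(u : 'I_n) 1 = n.
Proof. by rewrite sum1_card card_ord. Qed.

Lemma nonisolated (n : nat) (c : rel 'I_n) :
  (forall u v, u != v -> deg c u = 0 -> deg c v = 0 -> False) ->
  n.-1 <= \sum_u (0 < deg c u).
Proof.
move=> h; case: (pickP (fun u => deg c u == 0)) => [w /eqP hw | hn].
- rewrite (bigD1 w) //= hw /=.
  rewrite (eq_bigr (fun _ => 1)); last first.
    move=> u huw; case: (posnP (deg c u)) => // h0.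
    by case: (h u w huw h0 hw).
  by rewrite sum1_card cardC1 card_ord.
- rewrite (eq_bigr (fun _ => 1)) ?sum_ones ?leq_pred //.
  by move=> u _; have := hn u; rewrite lt0n => ->.
Qed.

Lemma two_universal (n l : nat) (e : rel 'I_n) : (2 <= l)%N -> symmetric e -> NAW l e ->
  forall u v : 'I_n, u != v -> (forall w, w != u -> e u w) -> (forall w, w != v -> e v w) -> False.
Proof.
move=> hl hsym hN u v huv hu hv.
have [s hs] := hN (fun w => if w == u then 1%R else 0%R).
have hc : forall x, (forall w, w != x -> e x w) -> count (fun w => in_closed_nbhd e w x) s = size s.
  move=> x hx; rewrite -[RHS]count_predT; apply: eq_count => w.
  rewrite /in_closed_nbhd; case: eqP => //= /eqP hw.
  by rewrite hsym hx // eq_sym.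
have := hs u; have := hs v; rewrite /after_toggles !hc // eqxx [v == u]eq_sym (negbTE huv) GRing.add0r => ->.
rewrite GRing.addr0 => /eqP; rewrite GRing.oner_eq0.
by case: l hl {hN hs}.
Qed.

Lemma compl_sym (n : nat) (e : rel 'I_n) : symmetric e -> symmetric (gcompl e).
Proof. by move=> hs u v; rewrite /gcompl eq_sym hs. Qed.

Lemma compl_irr (n : nat) (e : rel 'I_n) : irreflexive (gcompl e).
Proof. by move=> u; rewrite /gcompl eqxx. Qed.

Lemma no_two_isolated (n l : nat) (e : rel 'I_n) : (2 <= l)%N -> symmetric e -> NAW l e ->
  forall u v, u != v -> deg (gcompl e) u = 0 -> deg (gcompl e) v = 0 -> False.
Proof.
move=> hl hs hN u v huv hu hv; apply: (two_universal hl hs hN huv).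
- move=> w hw; have := deg0P hu w; rewrite /gcompl eq_sym hw /=; by case: (e u w).
- move=> w hw; have := deg0P hv w; rewrite /gcompl eq_sym hw /=; by case: (e v w).
Qed.

Lemma sum_deg_lb (n l : nat) (e : rel 'I_n) : (2 <= l)%N -> simple_graph e -> NAW l e ->
  n.-1 <= \sum_u deg (gcompl e) u.
Proof.
move=> hl [hs hi] hN.
apply: (leq_trans (nonisolated (no_two_isolated hl hs hN))).
by apply: leq_sum => u _; case: (deg _ u).
Qed.

Lemma upper (n l : nat) (e : rel 'I_n) : odd n -> (2 <= l)%N -> simple_graph e -> NAW l e ->
  n./2 <= nedges (gcompl e).
Proof.
move=> ho hl he hN; have := sum_deg_lb hl he hN.
case: he => hs hi; rewrite (handshake (compl_sym hs) (compl_irr e)).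
have := odd_double_half n; rewrite ho -mul2n; lia.
Qed.

Lemma deg_le1 (n l : nat) (e : rel 'I_n) : odd n -> (2 <= l)%N -> simple_graph e -> NAW l e ->
  nedges e = ('C(n, 2) - n./2)%N -> forall u, deg (gcompl e) u <= 1.
Proof.
move=> ho hl he hN hE u0; rewrite leqNgt; apply/negP => h2.
have hup := upper ho hl he hN; have hc := nedges_compl e.
have hsum := sum_deg_lb hl he hN.
have hnon := nonisolated (no_two_isolated hl he.1 hN).
case: (he) => hs hi; move: hsum; rewrite (handshake (compl_sym hs) (compl_irr e)) => hsum.
have : \sum_u deg (gcompl e) u >= 1 + \sum_u (0 < deg (gcompl e) u).
  rewrite (bigD1 u0) //= [X in _ <= X](bigD1 u0) //= (ltnW h2) addnA.
  rewrite leq_add //; last by apply: leq_sum => u _; case: (deg _ u).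
rewrite (handshake (compl_sym hs) (compl_irr e)).
have := odd_double_half n; rewrite ho -mul2n; lia.
Qed.

Definition sig (n : nat) (c : rel 'I_n) u := odflt u [pick v | c u v].

Lemma sigP (n : nat) (c : rel 'I_n) u : c u (sig c u) \/ (sig c u = u /\ forall w, ~~ c u w).
Proof.
rewrite /sig; case: pickP => [v hv|h]; [by left | right; split => // w].
by rewrite h.
Qed.

Lemma sig_c (n : nat) (c : rel 'I_n) (huniq : forall u v w, c u v -> c u w -> v = w) u v :
  c u v -> sig c u = v.
Proof.
move=> huv; case: (sigP c u) => [h|[_ h]]; first exact: huniq h huv.
by have := h v; rewrite huv.
Qed.

Lemma sigK (n : nat) (c : rel 'I_n) : symmetric c ->
  (forall u v w, c u v -> c u w -> v = w) -> forall u, sig c (sig c u) = u.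
Proof.
move=> hs hu u; case: (sigP c u) => [h|[h _]]; last by rewrite !h.
by apply: sig_c => //; rewrite hs.
Qed.

Lemma sig_fix (n : nat) (c : rel 'I_n) : irreflexive c -> forall u,
  sig c u = u -> forall w, ~~ c u w.
Proof.
move=> hi u hu; case: (sigP c u) => [h|[_ //]].
by move: h; rewrite hu hi.
Qed.


Lemma iso_matching (n : nat) (c : rel 'I_n.+1) : ~~ odd n -> symmetric c -> irreflexive c ->
  (forall u v w, c u v -> c u w -> v = w) ->
  (forall u v, u != v -> (forall w, ~~ c u w) -> (forall w, ~~ c v w) -> False) ->
  exists p : {perm 'I_n.+1}, forall u v, u != v -> c u v = Mn n.+1 (p u) (p v).
Proof.
move=> hev hs hi hu h2.
pose s := sig c.
have sK : forall u, s (s u) = u := sigK hs hu.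
have sinj : injective s := can_inj sK.
pose as_ := [seq v <- enum 'I_n.+1 | (v : 'I_n.+1) < s v].
pose rk (v : 'I_n.+1) := index v as_.
pose rep (v : 'I_n.+1) := if v < s v then v else s v.
pose gn (v : 'I_n.+1) := if s v == v then n else ((s v < v) + (rk (rep v)).*2)%N.
have hfix : forall u v, s u = u -> s v = v -> u = v.
  move=> u v hu' hv'; apply/eqP/negPn/negP => huv.
  exact: (h2 u v huv (sig_fix hi hu') (sig_fix hi hv')).
have mem_as : forall v, (v \in as_) = (v < s v) by move=> v; rewrite mem_filter mem_enum andbT.
have rep_in : forall v, s v != v -> rep v \in as_.
  move=> v hv; rewrite mem_as /rep; case: (ltngtP v (s v)) => h //.
    by rewrite sK.
  by move: hv; rewrite -(val_inj h) eqxx.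
have size_as : (size as_).*2 <= n.
  have hu2 : uniq (as_ ++ map s as_).
    rewrite cat_uniq map_inj_uniq // filter_uniq ?enum_uniq //= andbT.
    apply/hasPn => x /mapP [y hy ->]; rewrite mem_as sK; move: hy; rewrite mem_as.
    by move=> h; rewrite ltnNge ltnW.
  have := uniq_leq_size hu2 (fun x _ => mem_enum _ x).
  rewrite size_cat size_map size_enum_ord addnn => h.
  have := odd_double_half n; rewrite (negbTE hev) add0n => hn.
  move: h hn; rewrite -!mul2n; lia.
have rk_lt : forall v, s v != v -> rk (rep v) < size as_.
  by move=> v hv; rewrite /rk index_mem rep_in.
have rk_inj : forall x y, x \in as_ -> y \in as_ -> rk x = rk y -> x = y.
  move=> x y hx hy; rewrite /rk => hxy.
  by rewrite -{1}(nth_index x hx) hxy (nth_index x hy).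
have gn_lt : forall v, s v != v -> gn v < n.
  move=> v hv; rewrite /gn (negbTE hv); have := rk_lt v hv.
  move: size_as; rewrite -!mul2n.
move: (rk (rep v)) (size as_) (s v < v) => r k [] /=; lia.
have gn_le : forall v, gn v < n.+1.
  move=> v; case: (eqVneq (s v) v) => hv; last by apply: ltnW; apply: gn_lt.
  by rewrite /gn hv eqxx.
have half_gn : forall v, (gn v)./2 = if s v == v then n./2 else rk (rep v).
  by move=> v; rewrite /gn; case: eqP => // _; rewrite half_bit_double.
have hn : n./2.*2 = n by have := odd_double_half n; rewrite (negbTE hev).
have key : forall u v, u != v -> c u v = ((gn u)./2 == (gn v)./2).
  move=> u v huv; rewrite !half_gn.
  case: (eqVneq (s u) u) => hsu; case: (eqVneq (s v) v) => hsv.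
  - by case: (h2 u v huv (sig_fix hi hsu) (sig_fix hi hsv)).
  - rewrite (negbTE (sig_fix hi hsu v)); apply/esym/negbTE.
    have := rk_lt v hsv; move: size_as hn; rewrite -!mul2n; lia.
  - rewrite hs (negbTE (sig_fix hi hsv u)); apply/esym/negbTE.
    have := rk_lt u hsu; move: size_as hn; rewrite -!mul2n; lia.
  have cs : forall w, s w != w -> c w (s w).
    by move=> w hw; case: (sigP c w) => // [[hw' _]]; move: hw; rewrite /s hw' eqxx.
  apply/idP/eqP.
  - move=> h; have su : s u = v := sig_c hu h.
    have sv : s v = u by apply: sig_c => //; rewrite hs.
    rewrite /rep su sv; case: (ltngtP u v) => // /val_inj huv'.
    by rewrite huv' eqxx in huv.
  - move=> hr0; have := rk_inj _ _ (rep_in _ hsu) (rep_in _ hsv) hr0; rewrite /rep.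
    case: (u < s u); case: (v < s v) => hr.
    + by rewrite hr eqxx in huv.
    + by rewrite hr hs cs.
    + by rewrite -hr cs.
    + by move/sinj: hr => hr; rewrite hr eqxx in huv.
have gn_inj : forall u v, gn u = gn v -> u = v.
  move=> u v h; apply/eqP/negPn/negP => huv.
  case: (eqVneq (s u) u) => hsu; case: (eqVneq (s v) v) => hsv.
  - by move: huv; rewrite (hfix _ _ hsu hsv) eqxx.
  - by have := gn_lt v hsv; rewrite -h /gn hsu eqxx ltnn.
  - by have := gn_lt u hsu; rewrite h /gn hsv eqxx ltnn.
  - have := key u v huv; rewrite h eqxx => cuv.
    have su : s u = v := sig_c hu cuv.
    have sv : s v = u by apply: sig_c => //; rewrite hs.
    move: (congr1 odd h); rewrite /gn (negbTE hsu) (negbTE hsv) !oddD !odd_double !addbF su sv.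
    by case: (ltngtP u v) => // /val_inj huv'; move: huv; rewrite huv' eqxx.
have ginj : injective (fun v => inord (gn v) : 'I_n.+1).
  by move=> u v /(congr1 val); rewrite /= !inordK ?gn_le //; exact: gn_inj.
exists (perm ginj) => u v huv; rewrite /Mn !permE (inj_eq ginj) huv /= !inordK ?gn_le //.
exact: key.
Qed.


Definition tau (m : nat) (u : 'I_m.+1) : 'I_m.+1 := inord (if odd u then u.-1 else u.+1).

Lemma Mn_sym (m : nat) : symmetric (Mn m).
Proof. by move=> u v; rewrite /Mn eq_sym [X in _ && X]eq_sym. Qed.

Lemma Mn_irr (m : nat) : irreflexive (Mn m).
Proof. by move=> u; rewrite /Mn eqxx. Qed.

Lemma Mn_max (m : nat) (u : 'I_m.+1) : ~~ odd m -> Mn m.+1 ord_max u = false.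
Proof.
move=> hev; rewrite /Mn /=; apply/negbTE/negP => /andP [hne /eqP hh].
have hu := ltn_ord u.
have hm := odd_double_half m; rewrite (negbTE hev) add0n in hm.
have hu2 := odd_double_half u.
have hne' : (nat_of_ord u) != m by move: hne; rewrite eq_sym.
move: hne' hh hm hu2 hu; rewrite -!mul2n.
move: (odd u) (u./2) (nat_of_ord u) (m./2) => b a x k; case: b => /= /eqP; lia.
Qed.

Lemma Mn_partner (m : nat) (u v : 'I_m.+1) : ~~ odd m -> u != ord_max ->
  Mn m.+1 u v = (v == tau u).
Proof.
move=> hev hu; rewrite /Mn /tau.
have hum : (nat_of_ord u < m)%N by have := ltn_ord u; move: hu; rewrite -val_eqE /=; lia.
have hm := odd_double_half m; rewrite (negbTE hev) add0n in hm.
have hu2 := odd_double_half u.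
have hv2 := odd_double_half v.
have hvm := ltn_ord v.
have hlt : ((if odd u then u.-1 else u.+1) < m.+1)%N.
  move: hm hu2 hum; rewrite -!mul2n.
  move: (nat_of_ord u) => x; move: (x./2) (odd x) => a b; case: b => /=; lia.
rewrite -[v == _]val_eqE /= inordK // -[u == v]val_eqE /=.
move: hm hu2 hv2 hum hvm hlt; rewrite -!mul2n.
move: (nat_of_ord u) (nat_of_ord v) => x y; move: (x./2) (odd x) (y./2) (odd y) => a b a' b'.
case: b; case: b' => /= h1 h2 h3 h4 h5 h6;
  (apply/andP/eqP => [[/eqP hne /eqP ha] | hy]; [lia | split; apply/eqP; lia]).
Qed.

Lemma count_seq (n l : nat) (x : 'I_n -> 'Z_l) (P : pred 'I_n) :
  ((count P (flatten [seq nseq (val (x u)) u | u <- enum 'I_n]))%:R : 'Z_l)%R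
  = (\sum_(u | P u) x u)%R.
Proof.
rewrite count_flatten -map_comp sumnE big_map big_enum /= natr_sum [RHS]big_mkcond /=.
apply: eq_bigr => u _; rewrite count_nseq.
by case: (P u); rewrite ?mul1n ?mul0n ?natr_Zp.
Qed.

Lemma nbhd_compl_Mn (m : nat) (u v : 'I_m) :
  in_closed_nbhd (gcompl (Mn m)) u v = ~~ Mn m u v.
Proof.
rewrite /in_closed_nbhd /gcompl; case: (eqVneq v u) => [->|h] /=.
  by rewrite Mn_irr.
by [].
Qed.

Lemma NAW_compl_Mn (m l : nat) : ~~ odd m -> NAW l (gcompl (Mn m.+1)).
Proof.
move=> hev f.
pose w : 'I_m.+1 := ord_max.
pose T := (- f w)%R.
pose x' := fun u => (T + f (tau u))%R.
pose x := fun u => if u == w then (T - \sum_(z | z != w) x' z)%R else x' u.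
exists (flatten [seq nseq (val (x u)) u | u <- enum 'I_m.+1]) => v.
rewrite /after_toggles (eq_count (fun u => nbhd_compl_Mn u v)) count_seq.
have tot : (\sum_u x u = T)%R.
  rewrite (bigD1 w) //= {1}/x eqxx.
  rewrite [X in (_ + X)%R](eq_bigr x') => [|u /negbTE hu]; last by rewrite /x hu.
  by rewrite subrK.
have -> : (\sum_(u | ~~ Mn m.+1 u v) x u = T - \sum_(u | Mn m.+1 u v) x u)%R.
  rewrite -tot [X in (_ = X - _)%R](bigID (fun u => Mn m.+1 u v)) /=.
  by rewrite addrC addrK.
case: (eqVneq v w) => hv.
- rewrite big_pred0 => [|u]; last by rewrite Mn_sym hv Mn_max.
  rewrite subr0 /T hv.
  exact: subrr.
- rewrite (big_pred1 (tau v)) => [|u]; last by rewrite Mn_sym Mn_partner.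
  have hM : Mn m.+1 v (tau v) by rewrite Mn_partner // eqxx.
  have htw : tau v != w.
    by apply/eqP => htw; move: hM; rewrite htw Mn_sym Mn_max.
  have htt : tau (tau v) = v.
    by apply/esym/eqP; rewrite -Mn_partner // Mn_sym.
  rewrite /x (negbTE htw) /x' htt.
  by rewrite opprD addNKr subrr.
Qed.

Lemma nedges_Mn (m : nat) : ~~ odd m -> nedges (Mn m.+1) = (m.+1)./2.
Proof.
move=> hev; have := handshake (@Mn_sym m.+1) (@Mn_irr m.+1).
have hd : forall u, deg (Mn m.+1) u = (u != ord_max).
  move=> u; rewrite /deg; case: eqVneq => [->|hu].
    by rewrite big1 // => v _; rewrite Mn_max.
  rewrite (eq_bigr (fun v => nat_of_bool (v == tau u))) => [|v _]; last by rewrite Mn_partner.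
  by rewrite (bigD1 (tau u)) //= eqxx big1 // => v /negbTE ->.
rewrite (eq_bigr _ (fun u _ => hd u)).
rewrite (eq_bigr (fun u => if u != ord_max then 1 else 0)) => [|u _]; last by case: (_ != _).
rewrite -big_mkcond sum1_card cardC1 card_ord /= uphalf_half (negbTE hev).
have := odd_double_half m; rewrite (negbTE hev) -mul2n; lia.
Qed.

Theorem proposition4p2 (n l : nat) :
  odd n -> (2 <= l)%N ->
  (* max(n,l) = C(n,2) - floor(n/2): upper bound ... *)
  (forall e : rel 'I_n, simple_graph e -> NAW l e ->
     (nedges e <= 'C(n, 2) - n./2)%N) /\
  (* ... attained by the complement of M_n, which is N-AW ... *)
  (simple_graph (gcompl (Mn n)) /\ NAW l (gcompl (Mn n)) /\
   nedges (gcompl (Mn n)) = ('C(n, 2) - n./2)%N) /\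
  (* ... and it is the unique such graph up to isomorphism. *)
  (forall e : rel 'I_n, simple_graph e -> NAW l e ->
     nedges e = ('C(n, 2) - n./2)%N -> isomorphic e (gcompl (Mn n))).
Proof.
move=> ho hl; split; [|split].
- move=> e he hN; have := upper ho hl he hN; have := nedges_compl e; lia.
- case: n ho => [//|m] ho; have hev : ~~ odd m by [].
  split; first by split; [exact: compl_sym (@Mn_sym _) | exact: compl_irr].
  split; first exact: NAW_compl_Mn.
  have := nedges_compl (Mn m.+1); rewrite nedges_Mn //; lia.
- case: n ho => [//|m] ho; have hev : ~~ odd m by [].
  move=> e he hN hE.
  have hd1 := deg_le1 ho hl he hN hE.
  pose c := gcompl e.
  have huniq : forall u v w, c u v -> c u w -> v = w.
    move=> u v w huv huw; apply/eqP/negPn/negP => hvw.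
    have hwv : w != v by rewrite eq_sym.
    have := hd1 u; rewrite /deg (bigD1 v) //= (bigD1 w) //=.
    by rewrite -/c huv huw.
  have h2' : forall u v, u != v -> (forall w, ~~ c u w) -> (forall w, ~~ c v w) -> False.
    move=> u v huv hu hv; apply: (no_two_isolated hl he.1 hN huv).
      by rewrite /deg big1 // => w _; move: (hu w); rewrite /c; case: (gcompl e u w).
    by rewrite /deg big1 // => w _; move: (hv w); rewrite /c; case: (gcompl e v w).
  have [p hp] := iso_matching hev (compl_sym he.1) (@compl_irr _ e) huniq h2'.
  exists p => u v; case: (eqVneq u v) => [->|huv].
    by rewrite he.2 /gcompl eqxx.
  rewrite /gcompl (inj_eq perm_inj) huv /= -hp // /c /gcompl huv /=.
  by case: (e u v).
Qed.
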